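(* Let $\theta$ be a well-founded tree and let $Y$ be an infinite dimensional closed subspace of $Y_G(\theta)$. Then there is a normalized sequence $(y_i)_{i\in\mathbb{N}}$ in $Y$ equivalent to the unit vector basis of $c_0$, and a sequence $(g_i)_{i\in\mathbb{N}}$ in $G(\theta)$ such that $g_i<g_{i+1}$ for all $i$, $g_i(y_i)>\frac12$ for all $i$, and $|g_i(y_k)|<2^{-(k+2)}$ for all $i\neq k$.
   Context: Fix a compatible enumeration $(s_n)$ of $\mathbb{N}^{<\mathbb{N}}$ (bijective, $s_n\preceq s_m\Rightarrow n\le m$, $\preceq$ the extension order); $(e_s)$ is the unit vector basis of $c_{00}(\mathbb{N}^{<\mathbb{N}})$, and for $x,g\in c_{00}(\mathbb{N}^{<\mathbb{N}})$, $g(x)=\sum_sg(s)x(s)$. For a tree $\theta$, $G(\theta)=\{\sum_{i=1}^n a_ie_{t_i}: n\in\mathbb{N},\ t_1\prec t_2\prec\dots\prec t_n\in\theta,\ |a_i|=1\}$. $Y_G(\theta)$ is the completion of $c_{00}(\theta)$ under $\|x\|_G=\sup\{g(x):g\in G(\theta)\}$ (equivalently, the sup over segments $I$ of $\theta$ of $\sum_{s\in I}|x(s)|$); each $g\in G(\theta)$ extends to a norm-at-most-one functional on $Y_G(\theta)$. For $g,g'\in c_{00}$, $g<g'$ means every index $n$ with $s_n$ in the support of $g$ is less than every index with $s_n$ in the support of $g'$. A tree is well-founded if it has no infinite branch. *)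

(* Defs.v *)
From Stdlib Require Import Reals List.
Import ListNotations.
Open Scope R_scope.

Definition node := list nat.

Definition prefix (s t : node) : Prop := exists u, t = s ++ u.
Definition sprefix (s t : node) : Prop := exists u, u <> [] /\ t = s ++ u.

Definition compatible_enum (enum : nat -> node) (idx : node -> nat) : Prop :=
  (forall n, idx (enum n) = n) /\ (forall s, enum (idx s) = s) /\
  (forall n m, prefix (enum n) (enum m) -> (n <= m)%nat).

Definition is_tree (theta : node -> Prop) : Prop :=
  forall s t, prefix s t -> theta t -> theta s.

Definition well_founded_tree (theta : node -> Prop) : Prop :=
  ~ exists sigma : nat -> nat, forall n, theta (map sigma (seq 0 n)).

Fixpoint chain_step (l : list node) : Prop :=
  match l with
  | [] => True
  | t :: l' => match l' with
               | [] => True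
               | t' :: _ => sprefix t t' /\ chain_step l'
               end
  end.
Definition is_chain (theta : node -> Prop) (l : list node) : Prop :=
  Forall theta l /\ chain_step l.

Definition vec := node -> R.

Definition vsub (x y : vec) : vec := fun s => x s - y s.

Fixpoint sumN (n : nat) (f : nat -> R) : R :=
  match n with O => 0 | S k => sumN k f + f k end.

Fixpoint maxabsN (n : nat) (a : nat -> R) : R :=
  match n with O => 0 | S k => Rmax (maxabsN k a) (Rabs (a k)) end.

Definition lincomb (n : nat) (a : nat -> R) (y : nat -> vec) : vec :=
  fun s => sumN n (fun i => a i * y i s).

Definition chain_sum (x : vec) (l : list node) : R :=
  fold_right (fun t acc => Rabs (x t) + acc) 0 l.

(* ||x||_G <= M, where ||x||_G = sup over (finite) segments of theta of the
   sum of |x(s)|, equivalently sup over g in G(theta) of g(x). *)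
Definition norm_le (theta : node -> Prop) (x : vec) (M : R) : Prop :=
  forall l, is_chain theta l -> chain_sum x l <= M.

Definition norm_ge (theta : node -> Prop) (x : vec) (c : R) : Prop :=
  forall M, norm_le theta x M -> c <= M.

Definition tail_proj (idx : node -> nat) (n : nat) (x : vec) : vec :=
  fun s => if Nat.ltb (idx s) n then 0 else x s.

(* Y_G(theta) = completion of c00(theta) under ||.||_G, realised concretely as
   those x supported in theta that are norm limits of their initial
   projections P_n x (P_n = restriction to {s_0,...,s_{n-1}}). *)
Definition in_YG (theta : node -> Prop) (idx : node -> nat) (x : vec) : Prop :=
  (forall s, ~ theta s -> x s = 0) /\
  (forall eps, 0 < eps -> exists N, forall n, (N <= n)%nat ->
       norm_le theta (tail_proj idx n x) eps).

Definition closed_subspace (theta : node -> Prop) (idx : node -> nat)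
    (Y : vec -> Prop) : Prop :=
  (forall x, Y x -> in_YG theta idx x) /\
  Y (fun _ => 0) /\
  (forall x y, Y x -> Y y -> Y (fun s => x s + y s)) /\
  (forall c x, Y x -> Y (fun s => c * x s)) /\
  (forall x, in_YG theta idx x ->
     (forall eps, 0 < eps -> exists y, Y y /\ norm_le theta (vsub x y) eps) ->
     Y x).

Definition infinite_dimensional (Y : vec -> Prop) : Prop :=
  forall n, exists y : nat -> vec, (forall i, (i < n)%nat -> Y (y i)) /\
    (forall a : nat -> R, (forall s, lincomb n a y s = 0) ->
       forall i, (i < n)%nat -> a i = 0).

(* Elements of G(theta): lists of (coefficient, node) pairs
   [(a_1,t_1);...;(a_n,t_n)] with t_1 ≺ ... ≺ t_n in theta and |a_i| = 1,
   representing sum a_i e_{t_i}. *)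
Definition in_G (theta : node -> Prop) (g : list (R * node)) : Prop :=
  is_chain theta (map snd g) /\ Forall (fun p => Rabs (fst p) = 1) g.

Definition gapply (g : list (R * node)) (x : vec) : R :=
  fold_right (fun p acc => fst p * x (snd p) + acc) 0 g.

Definition glt (idx : node -> nat) (g g' : list (R * node)) : Prop :=
  forall p p', In p g -> In p' g' -> fst p <> 0 -> fst p' <> 0 ->
    (idx (snd p) < idx (snd p'))%nat.

Definition normalized (theta : node -> Prop) (x : vec) : Prop :=
  norm_le theta x 1 /\ norm_ge theta x 1.

Definition equiv_c0_basis (theta : node -> Prop) (y : nat -> vec) : Prop :=
  exists A B, 0 < A /\ 0 < B /\
    forall (n : nat) (a : nat -> R),
      norm_ge theta (lincomb n a y) (A * maxabsN n a) /\
      norm_le theta (lincomb n a y) (B * maxabsN n a).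

(* Main.v *)
Require Import Defs.
From Stdlib Require Import Reals List Lra Lia ClassicalEpsilon FunctionalExtensionality Classical.
Import ListNotations.
Open Scope R_scope.

Lemma prefix_refl s : prefix s s.
Proof. exists []. now rewrite app_nil_r. Qed.

Lemma prefix_trans a b c : prefix a b -> prefix b c -> prefix a c.
Proof. intros [u ->] [v ->]. exists (u ++ v). now rewrite app_assoc. Qed.

Lemma sprefix_prefix a b : sprefix a b -> prefix a b.
Proof. intros [u [_ ->]]. now exists u. Qed.

Lemma sprefix_trans a b c : sprefix a b -> sprefix b c -> sprefix a c.
Proof.
  intros [u [Hu ->]] [v [Hv ->]]. exists (u ++ v). split.
  - destruct u; [congruence|discriminate].
  - now rewrite app_assoc.
Qed.

Lemma sprefix_irrefl a : ~ sprefix a a.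
Proof.
  intros [u [Hu E]]. apply (f_equal (@length nat)) in E.
  rewrite length_app in E. destruct u; [congruence|simpl in E; lia].
Qed.

Lemma prefix_comparable a b c : prefix a c -> prefix b c -> prefix a b \/ prefix b a.
Proof.
  revert b c. induction a as [|x a IH]; intros b c Ha Hb.
  - left. now exists b.
  - destruct b as [|y b].
    + right. now exists (x :: a).
    + destruct Ha as [u Hu]. destruct Hb as [v Hv]. subst c.
      simpl in Hv. injection Hv as -> Hv.
      destruct (IH b (a ++ u)) as [[w ->]|[w ->]].
      * now exists u.
      * now exists v.
      * left. exists w. reflexivity.
      * right. exists w. reflexivity.
Qed.

Lemma prefix_app_inv t c c' s : prefix (t ++ [c]) s -> prefix (t ++ [c']) s -> c = c'.
Proof.
  intros [u Hu] [v Hv]. subst s. rewrite <- !app_assoc in Hv.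
  apply app_inv_head in Hv. simpl in Hv. now injection Hv.
Qed.

Lemma prefix_length a b : prefix a b -> (length a <= length b)%nat.
Proof. intros [u ->]. rewrite length_app. lia. Qed.

Lemma chain_step_tail t l : chain_step (t :: l) -> chain_step l.
Proof. destruct l; simpl; tauto. Qed.

Lemma chain_head_sprefix t l : chain_step (t :: l) -> forall s, In s l -> sprefix t s.
Proof.
  revert t. induction l as [|a l IH]; intros t H s Hs; [destruct Hs|].
  simpl in H. destruct H as [H1 H2]. destruct Hs as [<-|Hs]; [exact H1|].
  apply sprefix_trans with a; [exact H1|]. now apply IH.
Qed.

Lemma chain_comparable l : chain_step l -> forall s s', In s l -> In s' l ->
  prefix s s' \/ prefix s' s.
Proof.
  induction l as [|a l IH]; intros H s s' Hs Hs'; [destruct Hs|].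
  pose proof (chain_head_sprefix _ _ H) as Hh.
  pose proof (chain_step_tail _ _ H) as Ht.
  destruct Hs as [<-|Hs]; destruct Hs' as [<-|Hs'].
  - left; apply prefix_refl.
  - left. apply sprefix_prefix. now apply Hh.
  - right. apply sprefix_prefix. now apply Hh.
  - now apply IH.
Qed.

Lemma chain_step_filter (f : node -> bool) l : chain_step l -> chain_step (filter f l).
Proof.
  induction l as [|a l IH]; intros H; [exact I|].
  pose proof (chain_head_sprefix _ _ H) as Hh.
  pose proof (chain_step_tail _ _ H) as Ht.
  simpl. destruct (f a); [|now apply IH].
  specialize (IH Ht). destruct (filter f l) as [|b l'] eqn:E; [exact I|].
  split; [|exact IH]. apply Hh. assert (In b (filter f l)) by (rewrite E; now left).
  apply filter_In in H0. tauto.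
Qed.

Lemma is_chain_filter th (f : node -> bool) l : is_chain th l -> is_chain th (filter f l).
Proof.
  intros [H1 H2]. split; [|now apply chain_step_filter].
  apply Forall_forall. intros x Hx. apply filter_In in Hx. rewrite Forall_forall in H1. now apply H1.
Qed.

Lemma is_chain_nil th : is_chain th [].
Proof. split; [constructor|exact I]. Qed.

Lemma is_chain_single th s : th s -> is_chain th [s].
Proof. intros H. split; [now constructor|exact I]. Qed.

Lemma cs_cons x t l : chain_sum x (t :: l) = Rabs (x t) + chain_sum x l.
Proof. reflexivity. Qed.

Lemma cs_nonneg x l : 0 <= chain_sum x l.
Proof. induction l; simpl; [lra|]. pose proof (Rabs_pos (x a)). unfold chain_sum in *. simpl. lra. Qed.

Lemma cs_dom2 x u v l : (forall s, In s l -> Rabs (x s) <= Rabs (u s) + Rabs (v s)) ->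
  chain_sum x l <= chain_sum u l + chain_sum v l.
Proof.
  induction l as [|a l IH]; intros H; [simpl; lra|].
  rewrite !cs_cons. assert (H1 := H a (or_introl eq_refl)).
  assert (chain_sum x l <= chain_sum u l + chain_sum v l) by (apply IH; intros; apply H; now right).
  lra.
Qed.

Lemma cs_dom x u l : (forall s, In s l -> Rabs (x s) <= Rabs (u s)) ->
  chain_sum x l <= chain_sum u l.
Proof.
  intros H. pose proof (cs_dom2 x u (fun _ => 0) l) as K.
  assert (chain_sum (fun _ => 0) l = 0).
  { clear. induction l; [reflexivity|]. rewrite cs_cons, IHl, Rabs_R0. lra. }
  rewrite H0 in K. rewrite <- (Rplus_0_r (chain_sum u l)). apply K.
  intros s Hs. rewrite Rabs_R0, Rplus_0_r. now apply H.
Qed.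

Lemma cs_ext x y l : (forall s, In s l -> x s = y s) -> chain_sum x l = chain_sum y l.
Proof.
  induction l as [|a l IH]; intros H; [reflexivity|].
  rewrite !cs_cons, H by now left. f_equal. apply IH. intros; apply H; now right.
Qed.

Lemma cs_scale c x l : chain_sum (fun s => c * x s) l = Rabs c * chain_sum x l.
Proof. induction l; [simpl; ring|]. rewrite !cs_cons, IHl, Rabs_mult. ring. Qed.

Lemma sumN_ext n f g : (forall i, (i < n)%nat -> f i = g i) -> sumN n f = sumN n g.
Proof.
  induction n; intros H; simpl; [reflexivity|]. rewrite IHn.
  - rewrite H by lia. reflexivity.
  - intros; apply H; lia.
Qed.

Lemma sumN_le n f g : (forall i, (i < n)%nat -> f i <= g i) -> sumN n f <= sumN n g.
Proof.
  induction n; intros H; simpl; [lra|].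
  assert (sumN n f <= sumN n g) by (apply IHn; intros; apply H; lia).
  assert (f n <= g n) by (apply H; lia). lra.
Qed.

Lemma sumN_nonneg n f : (forall i, (i < n)%nat -> 0 <= f i) -> 0 <= sumN n f.
Proof.
  intros H. replace 0 with (sumN n (fun _ => 0)).
  - apply sumN_le. exact H.
  - induction n; simpl; [reflexivity|]. rewrite IHn; [lra|]. intros; apply H; lia.
Qed.

Lemma sumN_plus n f g : sumN n (fun i => f i + g i) = sumN n f + sumN n g.
Proof. induction n; simpl; lra. Qed.

Lemma sumN_scal n c f : sumN n (fun i => c * f i) = c * sumN n f.
Proof. induction n; simpl; lra. Qed.

Lemma sumN_zero n : sumN n (fun _ => 0) = 0.
Proof. induction n; simpl; lra. Qed.

Lemma sumN_abs n f : Rabs (sumN n f) <= sumN n (fun i => Rabs (f i)).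
Proof.
  induction n; simpl. rewrite Rabs_R0; lra.
  eapply Rle_trans; [apply Rabs_triang|]. lra.
Qed.

Lemma maxabs_nonneg n a : 0 <= maxabsN n a.
Proof. induction n; simpl; [lra|]. eapply Rle_trans; [exact IHn|apply Rmax_l]. Qed.

Lemma maxabs_ge n a i : (i < n)%nat -> Rabs (a i) <= maxabsN n a.
Proof.
  induction n; intros H; [lia|]. simpl. destruct (Nat.eq_dec i n) as [->|Hne].
  - apply Rmax_r.
  - eapply Rle_trans; [apply IHn; lia|apply Rmax_l].
Qed.

Lemma maxabs_attained n a : (0 < n)%nat -> exists j, (j < n)%nat /\ Rabs (a j) = maxabsN n a.
Proof.
  induction n; intros H; [lia|]. simpl.
  destruct n as [|n].
  - exists 0%nat. split; [lia|]. simpl. rewrite Rmax_right; [reflexivity|apply Rabs_pos].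
  - destruct (IHn ltac:(lia)) as [j [Hj E]].
    destruct (Rle_dec (maxabsN (S n) a) (Rabs (a (S n)))) as [L|L].
    + exists (S n). split; [lia|]. now rewrite Rmax_right.
    + exists j. split; [lia|]. rewrite Rmax_left; [easy|lra].
Qed.

Lemma maxabs_le n a b : (forall i, (i < n)%nat -> Rabs (a i) <= Rabs (b i)) -> maxabsN n a <= maxabsN n b.
Proof.
  induction n; intros H; simpl; [lra|].
  apply Rmax_lub.
  - eapply Rle_trans; [apply IHn; intros; apply H; lia|apply Rmax_l].
  - eapply Rle_trans; [apply H; lia|apply Rmax_r].
Qed.

Lemma sumN_split n j x : (j < n)%nat ->
  sumN n x = x j + sumN n (fun i => if Nat.eq_dec i j then 0 else x i).
Proof.
  induction n; intros H; [lia|]. simpl.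
  destruct (Nat.eq_dec n j) as [->|Hne].
  - replace (sumN j (fun i => if Nat.eq_dec i j then 0 else x i)) with (sumN j x).
    + lra.
    + apply sumN_ext. intros i Hi. destruct (Nat.eq_dec i j); [lia|reflexivity].
  - rewrite IHn by lia. lra.
Qed.

Lemma geom_sum n : sumN n (fun i => (/2) ^ (S i)) = 1 - (/2) ^ n.
Proof. induction n; [simpl; lra|]. change (sumN (S n) (fun i => (/2) ^ (S i))) with
  (sumN n (fun i => (/2) ^ (S i)) + (/2) ^ (S n)). rewrite IHn. simpl. lra. Qed.

Lemma pow_half_pos k : 0 < (/2) ^ k.
Proof. apply pow_lt. lra. Qed.

Lemma pow_half_le k k' : (k <= k')%nat -> (/2) ^ k' <= (/2) ^ k.
Proof.
  intros H. induction H; [lra|]. simpl. pose proof (pow_half_pos m). lra.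
Qed.

Lemma half_small d : 0 < d -> exists K, forall k, (K <= k)%nat -> (/2) ^ k < d.
Proof.
  intros Hd. assert (Rabs (/2) < 1) by (rewrite Rabs_right; lra).
  destruct (pow_lt_1_zero (/2) H d Hd) as [K HK]. exists K. intros k Hk.
  specialize (HK k Hk). rewrite Rabs_right in HK; [exact HK|]. left; apply pow_half_pos.
Qed.

Fixpoint natsum (n : nat) (f : nat -> nat) : nat :=
  match n with O => O | S k => (natsum k f + f k)%nat end.

Lemma natsum_ge n f j : (j < n)%nat -> (f j <= natsum n f)%nat.
Proof. induction n; intros H; simpl; [lia|]. destruct (Nat.eq_dec j n) as [->|]; [lia|]. specialize (IHn ltac:(lia)). lia. Qed.

Fixpoint lsum (s : list nat) : nat := match s with [] => O | c :: s' => (c + lsum s')%nat end.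

Lemma lsum_ge c s : In c s -> (c <= lsum s)%nat.
Proof. induction s; simpl; intros H; [destruct H|]. destruct H as [->|H]; [lia|]. specialize (IHs H). lia. Qed.

Definition sincr (phi : nat -> nat) := forall i, (phi i < phi (S i))%nat.

Lemma sincr_lt phi : sincr phi -> forall i j, (i < j)%nat -> (phi i < phi j)%nat.
Proof.
  intros H i j Hij. induction Hij; [apply H|]. specialize (H m). lia.
Qed.

Lemma sincr_ge phi : sincr phi -> forall i, (i <= phi i)%nat.
Proof. intros H i. induction i; [lia|]. specialize (H i). lia. Qed.

Lemma sincr_inj phi : sincr phi -> forall i j, phi i = phi j -> i = j.
Proof.
  intros H i j E. destruct (Nat.lt_trichotomy i j) as [L|[L|L]]; auto.
  - pose proof (sincr_lt phi H i j L); lia.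
  - pose proof (sincr_lt phi H j i L); lia.
Qed.

Section Norm.
Variable theta : node -> Prop.

Lemma nl_nonneg x M : norm_le theta x M -> 0 <= M.
Proof. intros H. specialize (H [] (is_chain_nil theta)). simpl in H. lra. Qed.

Lemma nl_mono x M M' : norm_le theta x M -> M <= M' -> norm_le theta x M'.
Proof. intros H HM l Hl. specialize (H l Hl). lra. Qed.

Lemma nl_dom2 x u v M1 M2 : (forall s, theta s -> Rabs (x s) <= Rabs (u s) + Rabs (v s)) ->
  norm_le theta u M1 -> norm_le theta v M2 -> norm_le theta x (M1 + M2).
Proof.
  intros H H1 H2 l Hl. apply Rle_trans with (chain_sum u l + chain_sum v l); [apply cs_dom2|].
  - intros s Hs. apply H. destruct Hl as [Hf _]. rewrite Forall_forall in Hf. now apply Hf.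
  - specialize (H1 l Hl). specialize (H2 l Hl). lra.
Qed.

Lemma nl_dom x u M : (forall s, theta s -> Rabs (x s) <= Rabs (u s)) ->
  norm_le theta u M -> norm_le theta x M.
Proof.
  intros H H1 l Hl. apply Rle_trans with (chain_sum u l); [apply cs_dom|].
  - intros s Hs. apply H. destruct Hl as [Hf _]. rewrite Forall_forall in Hf. now apply Hf.
  - now apply H1.
Qed.

Lemma nl_scale c x M : norm_le theta x M -> norm_le theta (fun s => c * x s) (Rabs c * M).
Proof.
  intros H l Hl. rewrite cs_scale. apply Rmult_le_compat_l; [apply Rabs_pos|now apply H].
Qed.

Lemma nl_zero M : 0 <= M -> norm_le theta (fun _ => 0) M.
Proof.
  intros HM l Hl. replace (chain_sum (fun _ => 0) l) with 0; [lra|].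
  clear. induction l; [reflexivity|]. rewrite cs_cons, <- IHl, Rabs_R0. lra.
Qed.

Lemma nl_ext x y M : (forall s, x s = y s) -> norm_le theta x M -> norm_le theta y M.
Proof. intros H. apply nl_dom. intros s _. rewrite H. lra. Qed.

Lemma nl_lincomb n a v M : (forall i, (i < n)%nat -> norm_le theta (v i) (M i)) ->
  norm_le theta (lincomb n a v) (sumN n (fun i => Rabs (a i) * M i)).
Proof.
  induction n; intros H.
  - simpl. apply nl_ext with (fun _ => 0); [reflexivity|]. apply nl_zero. lra.
  - simpl. apply nl_dom2 with (lincomb n a v) (fun s => a n * v n s).
    + intros s _. unfold lincomb. simpl. apply Rabs_triang.
    + apply IHn. intros; apply H; lia.
    + apply nl_scale. apply H. lia.
Qed.

Definition bdd (x : vec) := exists M, norm_le theta x M.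

Definition csset (x : vec) (r : R) := exists l, is_chain theta l /\ r = chain_sum x l.

Lemma csset_bound x : bdd x -> bound (csset x).
Proof. intros [M HM]. exists M. intros r [l [Hl ->]]. now apply HM. Qed.

Lemma csset_ne x : exists r, csset x r.
Proof. exists 0. exists []. split; [apply is_chain_nil|reflexivity]. Qed.

Definition nrm (x : vec) : R :=
  match excluded_middle_informative (bdd x) with
  | left H => proj1_sig (completeness (csset x) (csset_bound x H) (csset_ne x))
  | right _ => 0
  end.

Lemma nrm_spec x : bdd x -> is_lub (csset x) (nrm x).
Proof.
  intros H. unfold nrm. destruct (excluded_middle_informative (bdd x)) as [H'|H']; [|contradiction].
  destruct (completeness _ _ _) as [m Hm]. exact Hm.
Qed.

Lemma nrm_le x : bdd x -> norm_le theta x (nrm x).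
Proof.
  intros H l Hl. destruct (nrm_spec x H) as [H1 _]. apply H1. now exists l.
Qed.

Lemma nrm_least x M : norm_le theta x M -> nrm x <= M.
Proof.
  intros H. assert (B : bdd x) by now exists M.
  destruct (nrm_spec x B) as [_ H2]. apply H2. intros r [l [Hl ->]]. now apply H.
Qed.

Lemma nrm_ge x : norm_ge theta x (nrm x).
Proof. intros M HM. now apply nrm_least. Qed.

Lemma nrm_nonneg x : bdd x -> 0 <= nrm x.
Proof. intros H. exact (nl_nonneg _ _ (nrm_le x H)). Qed.

Lemma nrm_gt x c : bdd x -> ~ norm_le theta x c -> c < nrm x.
Proof.
  intros H1 H2. destruct (Rlt_dec c (nrm x)) as [L|L]; [exact L|].
  exfalso. apply H2. apply nl_mono with (nrm x); [now apply nrm_le|lra].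
Qed.

Lemma bdd_dom x u : (forall s, theta s -> Rabs (x s) <= Rabs (u s)) -> bdd u -> bdd x.
Proof. intros H [M HM]. exists M. now apply nl_dom with u. Qed.

Lemma nrm_dom x u : (forall s, theta s -> Rabs (x s) <= Rabs (u s)) -> bdd u -> nrm x <= nrm u.
Proof. intros H B. apply nrm_least. apply nl_dom with u; [exact H|now apply nrm_le]. Qed.

Lemma bdd_scale c x : bdd x -> bdd (fun s => c * x s).
Proof. intros [M HM]. exists (Rabs c * M). now apply nl_scale. Qed.

Lemma nrm_scale_le c x : bdd x -> nrm (fun s => c * x s) <= Rabs c * nrm x.
Proof. intros B. apply nrm_least. apply nl_scale. now apply nrm_le. Qed.

Lemma nrm_scale c x : bdd x -> nrm (fun s => c * x s) = Rabs c * nrm x.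
Proof.
  intros B. apply Rle_antisym; [now apply nrm_scale_le|].
  destruct (Req_dec c 0) as [->|Hc].
  - rewrite Rabs_R0. rewrite Rmult_0_l. apply nrm_nonneg. apply bdd_scale, B.
  - pose proof (nrm_scale_le (/c) (fun s => c * x s) (bdd_scale c x B)) as K.
    cbv beta in K. replace (nrm (fun s => / c * (c * x s))) with (nrm x) in K.
    2:{ f_equal. apply functional_extensionality. intros s. field. exact Hc. }
    rewrite Rabs_inv in K. pose proof (Rabs_pos_lt c Hc).
    apply Rmult_le_compat_l with (r := Rabs c) in K; [|lra].
    rewrite <- Rmult_assoc, Rinv_r in K by lra. lra.
Qed.

Lemma bdd_dom2 x u v : (forall s, theta s -> Rabs (x s) <= Rabs (u s) + Rabs (v s)) ->
  bdd u -> bdd v -> bdd x.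
Proof. intros H [M1 H1] [M2 H2]. exists (M1 + M2). now apply nl_dom2 with u v. Qed.

Lemma nrm_dom2 x u v : (forall s, theta s -> Rabs (x s) <= Rabs (u s) + Rabs (v s)) ->
  bdd u -> bdd v -> nrm x <= nrm u + nrm v.
Proof. intros H B1 B2. apply nrm_least. apply nl_dom2 with u v; auto; now apply nrm_le. Qed.

Definition nrm1 x := norm_le theta x 1 /\ norm_ge theta x 1.

Lemma nrm1_iff x : nrm1 x <-> bdd x /\ nrm x = 1.
Proof.
  split.
  - intros [H1 H2]. assert (B : bdd x) by now exists 1. split; [exact B|].
    apply Rle_antisym; [now apply nrm_least|]. apply H2. now apply nrm_le.
  - intros [B E]. split.
    + rewrite <- E. now apply nrm_le.
    + rewrite <- E. apply nrm_ge.
Qed.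

Lemma bdd_lincomb n a v : (forall i, (i < n)%nat -> bdd (v i)) -> bdd (lincomb n a v).
Proof.
  intros H. assert (forall i, (i < n)%nat -> norm_le theta (v i) (nrm (v i))) by
    (intros; apply nrm_le; auto).
  eexists. apply nl_lincomb. exact H0.
Qed.

End Norm.

Definition restr (P : node -> Prop) (x : vec) : vec :=
  fun s => if excluded_middle_informative (P s) then x s else 0.

Definition hproj (idx : node -> nat) (N : nat) (x : vec) : vec :=
  fun s => if Nat.ltb (idx s) N then x s else 0.

Definition single (s0 : node) (x : vec) : vec :=
  fun s => if list_eq_dec Nat.eq_dec s s0 then x s else 0.

Lemma restr_abs P x s : Rabs (restr P x s) <= Rabs (x s).
Proof. unfold restr. destruct excluded_middle_informative; [lra|rewrite Rabs_R0; apply Rabs_pos]. Qed.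

Lemma hproj_abs idx N x s : Rabs (hproj idx N x s) <= Rabs (x s).
Proof. unfold hproj. destruct Nat.ltb; [lra|rewrite Rabs_R0; apply Rabs_pos]. Qed.

Lemma hproj_mono_abs idx N N' x s : (N <= N')%nat -> Rabs (hproj idx N x s) <= Rabs (hproj idx N' x s).
Proof.
  intros H. unfold hproj. destruct (Nat.ltb (idx s) N) eqn:E1.
  - apply Nat.ltb_lt in E1. replace (Nat.ltb (idx s) N') with true; [lra|].
    symmetry; apply Nat.ltb_lt; lia.
  - rewrite Rabs_R0. apply Rabs_pos.
Qed.

Lemma cs_single s0 x l : chain_step l -> chain_sum (single s0 x) l <= Rabs (x s0).
Proof.
  induction l as [|a l IH]; intros H; [simpl; apply Rabs_pos|].
  rewrite cs_cons. unfold single at 1.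
  destruct (list_eq_dec Nat.eq_dec a s0) as [->|Hne].
  - replace (chain_sum (single s0 x) l) with 0; [lra|].
    pose proof (chain_head_sprefix _ _ H) as Hh. clear IH H.
    induction l as [|b l IHl]; [reflexivity|]. rewrite cs_cons. unfold single at 1.
    destruct (list_eq_dec Nat.eq_dec b s0) as [->|_].
    + exfalso. apply (sprefix_irrefl s0). apply Hh. now left.
    + rewrite Rabs_R0, <- IHl; [lra|]. intros; apply Hh; now right.
  - rewrite Rabs_R0. rewrite Rplus_0_l. apply IH. now apply chain_step_tail with a.
Qed.

Section Setting.
Variable enum : nat -> node.
Variable idx : node -> nat.
Hypothesis Henum : compatible_enum enum idx.
Variable theta : node -> Prop.
Hypothesis Htree : is_tree theta.
Variable Y : vec -> Prop.
Hypothesis HY : closed_subspace theta idx Y.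

Lemma enum_idx s : enum (idx s) = s.
Proof. destruct Henum as [_ [H _]]. apply H. Qed.

Lemma bdd_single s0 x : bdd theta (single s0 x).
Proof. exists (Rabs (x s0)). intros l [_ Hl]. now apply cs_single. Qed.

Lemma bdd_hproj N x : bdd theta (hproj idx N x).
Proof.
  induction N.
  - exists 0. apply nl_ext with (fun _ => 0); [|apply nl_zero; lra].
    intros s. reflexivity.
  - apply bdd_dom2 with (hproj idx N x) (single (enum N) x); [|exact IHN|apply bdd_single].
    intros s _. unfold hproj, single.
    destruct (Nat.ltb (idx s) (S N)) eqn:E;
    destruct (Nat.ltb (idx s) N) eqn:E2;
    destruct (list_eq_dec Nat.eq_dec s (enum N)) as [Heq|Hne];
    rewrite ?Rabs_R0; pose proof (Rabs_pos (x s)); try lra.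
    exfalso. apply Nat.ltb_lt in E. apply Nat.ltb_ge in E2. apply Hne.
    replace N with (idx s) by lia. now rewrite enum_idx.
Qed.

Lemma Y_inYG y : Y y -> in_YG theta idx y.
Proof. destruct HY as [H _]. apply H. Qed.

Lemma Y_supp y s : Y y -> ~ theta s -> y s = 0.
Proof. intros H. destruct (Y_inYG y H) as [H1 _]. apply H1. Qed.

Lemma Y_tail y eps : Y y -> 0 < eps -> exists N, forall n, (N <= n)%nat ->
  norm_le theta (tail_proj idx n y) eps.
Proof. intros H. destruct (Y_inYG y H) as [_ H2]. apply H2. Qed.

Lemma Y_bdd y : Y y -> bdd theta y.
Proof.
  intros H. destruct (Y_tail y 1 H ltac:(lra)) as [N HN].
  apply bdd_dom2 with (hproj idx N y) (tail_proj idx N y).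
  - intros s _. unfold hproj, tail_proj. destruct Nat.ltb; rewrite Rabs_R0; lra.
  - apply bdd_hproj.
  - exists 1. apply HN. lia.
Qed.

Lemma Y_zero : Y (fun _ => 0).
Proof. destruct HY as [_ [H _]]. exact H. Qed.

Lemma Y_add x y : Y x -> Y y -> Y (fun s => x s + y s).
Proof. destruct HY as [_ [_ [H _]]]. apply H. Qed.

Lemma Y_scale c x : Y x -> Y (fun s => c * x s).
Proof. destruct HY as [_ [_ [_ [H _]]]]. apply H. Qed.

Lemma Y_lincomb n a v : (forall i, (i < n)%nat -> Y (v i)) -> Y (lincomb n a v).
Proof.
  induction n; intros H.
  - exact Y_zero.
  - change (Y (fun s => lincomb n a v s + a n * v n s)). apply Y_add.
    + apply IHn. intros; apply H; lia.
    + apply Y_scale. apply H. lia.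
Qed.

End Setting.

Definition reg (theta : node -> Prop) (ts : list node) (s : node) : Prop :=
  theta s /\ exists t, In t ts /\ prefix t s.

Definition expand (ts : list node) (n : nat) : list node :=
  flat_map (fun t => map (fun c => t ++ [c]) (seq 0 n)) ts.

Definition inc (ts : list node) : Prop :=
  forall t t', In t ts -> In t' ts -> prefix t t' -> t = t'.

Definition Fp theta ts n s : Prop := reg theta ts s /\ (In s ts \/ reg theta (expand ts n) s).

Lemma in_expand ts n u : In u (expand ts n) <-> exists t c, In t ts /\ (c < n)%nat /\ u = t ++ [c].
Proof.
  unfold expand. rewrite in_flat_map. split.
  - intros [t [Ht Hu]]. apply in_map_iff in Hu. destruct Hu as [c [<- Hc]].
    apply in_seq in Hc. exists t, c. repeat split; auto; lia.
  - intros [t [c [Ht [Hc ->]]]]. exists t. split; auto. apply in_map_iff. exists c.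
    split; auto. apply in_seq. lia.
Qed.

Lemma reg_expand theta ts n s : reg theta (expand ts n) s <->
  theta s /\ exists t c, In t ts /\ (c < n)%nat /\ prefix (t ++ [c]) s.
Proof.
  unfold reg. split.
  - intros [H1 [u [Hu Hp]]]. apply in_expand in Hu. destruct Hu as [t [c [Ht [Hc ->]]]].
    split; auto. exists t, c. auto.
  - intros [H1 [t [c [Ht [Hc Hp]]]]]. split; auto. exists (t ++ [c]). split; auto.
    apply in_expand. exists t, c. auto.
Qed.

Lemma reg_expand_sub theta ts n s : reg theta (expand ts n) s -> reg theta ts s.
Proof.
  intros H. apply reg_expand in H. destruct H as [H1 [t [c [Ht [_ Hp]]]]].
  split; auto. exists t. split; auto. apply prefix_trans with (t ++ [c]); auto. now exists [c].
Qed.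

Lemma inc_expand ts n : inc ts -> inc (expand ts n).
Proof.
  intros H u u' Hu Hu' Hp. apply in_expand in Hu. apply in_expand in Hu'.
  destruct Hu as [t [c [Ht [Hc ->]]]]. destruct Hu' as [t' [c' [Ht' [Hc' ->]]]].
  assert (E : t = t').
  { assert (prefix t (t' ++ [c'])) by (apply prefix_trans with (t ++ [c]); auto; now exists [c]).
    assert (prefix t' (t' ++ [c'])) by now exists [c'].
    destruct (prefix_comparable t t' (t' ++ [c'])) as [P|P]; auto.
    symmetry; auto. }
  subst t'. assert (c = c') by (apply (prefix_app_inv t c c' (t ++ [c'])); auto; apply prefix_refl).
  now subst.
Qed.

Lemma Fp_mono theta ts n n' s : (n <= n')%nat -> Fp theta ts n s -> Fp theta ts n' s.
Proof.
  intros Hn [H1 [H2|H2]]; split; auto. right. apply reg_expand in H2. apply reg_expand.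
  destruct H2 as [H3 [t [c [Ht [Hc Hp]]]]]. split; auto. exists t, c. repeat split; auto. lia.
Qed.

Lemma Fp_reg theta ts n s : Fp theta ts n s -> reg theta ts s.
Proof. now intros [H _]. Qed.

Lemma code_unique ts t t' c c' s s' : inc ts -> In t ts -> In t' ts ->
  prefix (t ++ [c]) s -> prefix (t' ++ [c']) s' -> (prefix s s' \/ prefix s' s) -> c = c'.
Proof.
  intros Hinc Ht Ht' H1 H2 Hc.
  assert (K : forall t t' c c' s s', In t ts -> In t' ts -> prefix (t ++ [c]) s ->
     prefix (t' ++ [c']) s' -> prefix s s' -> c = c').
  { clear - Hinc. intros t t' c c' s s' Ht Ht' H1 H2 Hp.
    assert (H1' : prefix (t ++ [c]) s') by (apply prefix_trans with s; auto).
    assert (prefix t s') by (apply prefix_trans with (t ++ [c]); auto; now exists [c]).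
    assert (prefix t' s') by (apply prefix_trans with (t' ++ [c']); auto; now exists [c']).
    assert (t = t').
    { destruct (prefix_comparable t t' s') as [P|P]; auto. symmetry; auto. }
    subst t'. now apply (prefix_app_inv t c c' s'). }
  destruct Hc as [Hc|Hc].
  - now apply (K t t' c c' s s').
  - symmetry. now apply (K t' t c' c s' s).
Qed.

Lemma nontop_code theta ts s : reg theta ts s -> ~ In s ts ->
  exists t c, In t ts /\ prefix (t ++ [c]) s /\ In c s.
Proof.
  intros [_ [t [Ht [u Hu]]]] Hn. destruct u as [|c u].
  - rewrite app_nil_r in Hu. subst. contradiction.
  - exists t, c. split; auto. split.
    + exists u. rewrite Hu, <- app_assoc. reflexivity.
    + rewrite Hu. apply in_or_app. right. now left.
Qed.

Lemma inc_single t : inc [t].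
Proof. intros a b [<-|[]] [<-|[]] _. reflexivity. Qed.

Definition Hyp theta idx (Y : vec -> Prop) (Rg : node -> Prop) : Prop :=
  forall N d, 0 < d -> exists y, Y y /\ nrm1 theta (restr Rg y) /\ norm_le theta (hproj idx N y) d.

Definition headnull theta idx (z : nat -> vec) : Prop :=
  forall N d, 0 < d -> exists K, forall k, (K <= k)%nat -> norm_le theta (hproj idx N (z k)) d.

Definition Concl theta idx (Y : vec -> Prop) (Rg : node -> Prop) : Prop :=
  exists (z : nat -> vec) B, (forall k, Y (z k)) /\ (forall k, nrm1 theta (restr Rg (z k))) /\
    headnull theta idx z /\
    forall n a phi, sincr phi ->
      norm_le theta (restr Rg (lincomb n a (fun i => z (phi i)))) (B * maxabsN n a).

Lemma restr_lincomb P n a v s : restr P (lincomb n a v) s = lincomb n a (fun i => restr P (v i)) s.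
Proof.
  unfold restr, lincomb. destruct excluded_middle_informative; [reflexivity|].
  rewrite (sumN_ext _ _ (fun _ => 0)); [now rewrite sumN_zero|]. intros; lra.
Qed.

Lemma dec3 (R F G : node -> Prop) x s : (forall s, F s -> G s) -> (forall s, G s -> R s) ->
  restr R x s = restr (fun s => R s /\ G s /\ ~ F s) x s + (restr F x s + restr (fun s => R s /\ ~ G s) x s).
Proof.
  intros H1 H2. unfold restr.
  repeat destruct excluded_middle_informative; try lra; exfalso; firstorder.
Qed.

Lemma block_bound theta (D : nat -> node -> Prop) (u : nat -> vec) n a phi :
  (forall k k' s s', D k s -> D k' s' -> (prefix s s' \/ prefix s' s) -> k = k') ->
  (forall k, norm_le theta (restr (D k) (u k)) 1) -> sincr phi ->
  norm_le theta (lincomb n a (fun i => restr (D (phi i)) (u (phi i)))) (maxabsN n a).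
Proof.
  intros Hdisj Hu Hphi l Hl.
  destruct (classic (exists s0 i0, In s0 l /\ (i0 < n)%nat /\ D (phi i0) s0)) as [[s0 [i0 [Hs0 [Hi0 HD]]]]|Hno].
  - rewrite (cs_ext _ (fun s => a i0 * restr (D (phi i0)) (u (phi i0)) s)).
    + rewrite cs_scale. apply Rle_trans with (Rabs (a i0) * 1).
      * apply Rmult_le_compat_l; [apply Rabs_pos|]. now apply Hu.
      * rewrite Rmult_1_r. now apply maxabs_ge.
    + intros s Hs. unfold lincomb. rewrite (sumN_split n i0) by exact Hi0.
      rewrite (sumN_ext _ _ (fun _ => 0)); [rewrite sumN_zero; lra|].
      intros i Hi. destruct (Nat.eq_dec i i0) as [->|Hne]; [reflexivity|].
      unfold restr. destruct excluded_middle_informative as [Hd|]; [|lra].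
      exfalso. apply Hne. apply (sincr_inj phi Hphi).
      apply (Hdisj _ _ s s0 Hd HD). destruct Hl as [_ Hc]. now apply chain_comparable with l.
  - rewrite (cs_ext _ (fun _ => 0)).
    + replace (chain_sum (fun _ : node => 0) l) with 0; [apply maxabs_nonneg|].
      clear. induction l; [reflexivity|]. rewrite cs_cons, <- IHl, Rabs_R0. lra.
    + intros s Hs. unfold lincomb. rewrite (sumN_ext _ _ (fun _ => 0)); [now rewrite sumN_zero|].
      intros i Hi. unfold restr. destruct excluded_middle_informative as [Hd|]; [|lra].
      exfalso. apply Hno. exists s, i. auto.
Qed.

Section Case1.
Variable enum : nat -> node.
Variable idx : node -> nat.
Hypothesis Henum : compatible_enum enum idx.
Variable theta : node -> Prop.
Variable Y : vec -> Prop.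
Hypothesis HY : closed_subspace theta idx Y.
Variable ts : list node.
Hypothesis Hinc : inc ts.

Definition Out n s := reg theta ts s /\ ~ Fp theta ts n s.

Lemma tailF y d : Y y -> 0 < d -> exists n', forall n, (n' <= n)%nat ->
  norm_le theta (restr (Out n) y) d.
Proof.
  intros Hy Hd. destruct (Y_tail idx theta Y HY y d Hy Hd) as [M HM].
  exists (S (natsum M (fun i => lsum (enum i)))). intros n Hn.
  apply nl_dom with (tail_proj idx M y); [|apply HM; lia].
  intros s _. unfold restr, tail_proj. destruct excluded_middle_informative as [[Hr HF]|].
  - destruct (Nat.ltb (idx s) M) eqn:E; [|lra]. exfalso. apply Nat.ltb_lt in E. apply HF.
    split; auto. destruct (classic (In s ts)) as [Hin|Hnin]; [now left|right].
    destruct (nontop_code theta ts s Hr Hnin) as [t [c [Ht [Hp Hc]]]].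
    apply reg_expand. split; [now destruct Hr|]. exists t, c. repeat split; auto.
    pose proof (lsum_ge c s Hc). pose proof (natsum_ge M (fun i => lsum (enum i)) (idx s) E).
    simpl in H0. rewrite (enum_idx enum idx Henum) in H0. lia.
  - rewrite Rabs_R0. apply Rabs_pos.
Qed.

Definition Case1 : Prop := forall n N d, 0 < d -> exists y, Y y /\ nrm1 theta (restr (reg theta ts) y) /\
  norm_le theta (hproj idx N y) d /\ norm_le theta (restr (Fp theta ts n) y) d.

Definition dl (k : nat) : R := (/2) ^ (k + 2).

Lemma dl_pos k : 0 < dl k.
Proof. apply pow_half_pos. Qed.

Definition Pgood (k n : nat) (p : vec * nat) : Prop :=
  Y (fst p) /\ nrm1 theta (restr (reg theta ts) (fst p)) /\ norm_le theta (hproj idx k (fst p)) (dl k) /\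
  norm_le theta (restr (Fp theta ts n) (fst p)) (dl k) /\ (n < snd p)%nat /\
  norm_le theta (restr (Out (snd p)) (fst p)) (dl k).

Hypothesis Hc1 : Case1.

Lemma Pgood_ex k n : exists p, Pgood k n p.
Proof.
  destruct (Hc1 n k (dl k) (dl_pos k)) as [y [H1 [H2 [H3 H4]]]].
  destruct (tailF y (dl k) H1 (dl_pos k)) as [n' Hn'].
  exists (y, S (Nat.max n n')). unfold Pgood; simpl.
  split; [auto|]. split; [auto|]. split; [auto|]. split; [auto|]. split; [lia|]. apply Hn'. lia.
Qed.

Definition pick (k n : nat) : vec * nat := epsilon (inhabits ((fun _ => 0), O)) (Pgood k n).

Lemma pick_spec k n : Pgood k n (pick k n).
Proof. unfold pick. apply epsilon_spec. apply Pgood_ex. Qed.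

Fixpoint ns (k : nat) : nat := match k with O => O | S k => snd (pick k (ns k)) end.

Definition yk (k : nat) : vec := fst (pick k (ns k)).

Lemma yk_spec k : Pgood k (ns k) (yk k, ns (S k)).
Proof. unfold yk. simpl. destruct (pick k (ns k)) eqn:E. simpl. rewrite <- E. apply pick_spec. Qed.

Lemma ns_incr k : (ns k < ns (S k))%nat.
Proof. destruct (yk_spec k) as [_ [_ [_ [_ [H _]]]]]. exact H. Qed.

Lemma ns_mono k k' : (k <= k')%nat -> (ns k <= ns k')%nat.
Proof. intros H. induction H; [lia|]. pose proof (ns_incr m). lia. Qed.

Definition Dk (k : nat) (s : node) : Prop :=
  reg theta ts s /\ Fp theta ts (ns (S k)) s /\ ~ Fp theta ts (ns k) s.

Lemma Dk_code k s : Dk k s -> exists t c, In t ts /\ prefix (t ++ [c]) s /\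
  (ns k <= c)%nat /\ (c < ns (S k))%nat.
Proof.
  intros [Hr [[_ HF] HnF]]. destruct HF as [Hin|Hx].
  - exfalso. apply HnF. split; auto.
  - apply reg_expand in Hx. destruct Hx as [Ht [t [c [Hin [Hc Hp]]]]].
    exists t, c. repeat split; auto.
    destruct (Compare_dec.le_lt_dec (ns k) c) as [L|L]; auto. exfalso. apply HnF. split; auto.
    right. apply reg_expand. split; auto. exists t, c. auto.
Qed.

Lemma Dk_disj k k' s s' : Dk k s -> Dk k' s' -> (prefix s s' \/ prefix s' s) -> k = k'.
Proof.
  intros H H' Hc. destruct (Dk_code k s H) as [t [c [Ht [Hp [L1 L2]]]]].
  destruct (Dk_code k' s' H') as [t' [c' [Ht' [Hp' [L1' L2']]]]].
  assert (c = c') by (apply (code_unique ts t t' c c' s s'); auto). subst c'.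
  destruct (Nat.lt_trichotomy k k') as [L|[L|L]]; auto.
  - pose proof (ns_mono (S k) k' L). lia.
  - pose proof (ns_mono (S k') k L). lia.
Qed.

Lemma case1_concl : Concl theta idx Y (reg theta ts).
Proof.
  exists yk, 2. split; [|split; [|split]]. all: try (intros k0; apply (yk_spec k0)).
  - intros N d Hd. destruct (half_small d Hd) as [K HK]. exists (Nat.max N K). intros k Hk.
    destruct (yk_spec k) as [_ [_ [H _]]].
    apply nl_dom with (hproj idx k (yk k)).
    + intros s _. apply hproj_mono_abs. lia.
    + apply nl_mono with (dl k); auto. unfold dl.
      apply Rle_trans with ((/2) ^ k); [apply pow_half_le; lia|]. left; apply HK; lia.
  - intros n a phi Hphi.
    set (E := fun i s => restr (Fp theta ts (ns (phi i))) (yk (phi i)) s +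
                         restr (Out (ns (S (phi i)))) (yk (phi i)) s).
    apply nl_ext with (fun s => lincomb n a (fun i => restr (Dk (phi i)) (yk (phi i))) s +
                                lincomb n a E s).
    { intros s. rewrite restr_lincomb. unfold lincomb. rewrite <- sumN_plus.
      apply sumN_ext. intros i _. unfold E.
      rewrite (dec3 (reg theta ts) (Fp theta ts (ns (phi i))) (Fp theta ts (ns (S (phi i))))).
      - unfold Dk, Out. ring.
      - intros s0. apply Fp_mono. pose proof (ns_incr (phi i)). lia.
      - intros s0. apply Fp_reg. }
    replace (2 * maxabsN n a) with (maxabsN n a + maxabsN n a) by ring.
    apply nl_dom2 with (lincomb n a (fun i => restr (Dk (phi i)) (yk (phi i)))) (lincomb n a E).
    + intros s _. apply Rabs_triang.
    + apply block_bound; auto.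
      * exact Dk_disj.
      * intros k. destruct (yk_spec k) as [_ [[H _] _]]. apply nl_dom with (restr (reg theta ts) (yk k)); auto.
        intros s _. unfold restr. repeat destruct excluded_middle_informative; try lra;
        try (rewrite Rabs_R0; apply Rabs_pos); exfalso; unfold Dk in *; tauto.
    + apply nl_mono with (sumN n (fun i => Rabs (a i) * (/2) ^ (S i))).
      * apply nl_lincomb. intros i Hi. unfold E.
        destruct (yk_spec (phi i)) as [_ [_ [_ [H1 [_ H2]]]]].
        replace ((/2) ^ (S i)) with ((/2)^(S i) / 2 + (/2)^(S i) / 2) by field.
        apply nl_dom2 with (restr (Fp theta ts (ns (phi i))) (yk (phi i))) (restr (Out (ns (S (phi i)))) (yk (phi i))).
        -- intros s _. apply Rabs_triang.
        -- apply nl_mono with (dl (phi i)); auto. unfold dl.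
           replace ((/2)^(S i)/2) with ((/2)^(i+2)) by (rewrite Nat.add_comm; simpl; field).
           apply pow_half_le. pose proof (sincr_ge phi Hphi i). lia.
        -- apply nl_mono with (dl (phi i)); auto. unfold dl.
           replace ((/2)^(S i)/2) with ((/2)^(i+2)) by (rewrite Nat.add_comm; simpl; field).
           apply pow_half_le. pose proof (sincr_ge phi Hphi i). lia.
      * apply Rle_trans with (sumN n (fun i => maxabsN n a * (/2) ^ (S i))).
        -- apply sumN_le. intros i Hi. apply Rmult_le_compat_r; [left; apply pow_half_pos|].
           now apply maxabs_ge.
        -- rewrite sumN_scal, geom_sum. pose proof (maxabs_nonneg n a). pose proof (pow_half_pos n).
           nra.
Qed.

End Case1.

Lemma restr_scale P c x : restr P (fun s => c * x s) = (fun s => c * restr P x s).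
Proof. apply functional_extensionality. intros s. unfold restr. destruct excluded_middle_informative; ring. Qed.

Lemma hproj_scale idx N c x : hproj idx N (fun s => c * x s) = (fun s => c * hproj idx N x s).
Proof. apply functional_extensionality. intros s. unfold hproj. destruct Nat.ltb; ring. Qed.

Lemma hproj_lincomb idx N n a v : hproj idx N (lincomb n a v) = lincomb n a (fun i => hproj idx N (v i)).
Proof.
  apply functional_extensionality. intros s. unfold hproj, lincomb. destruct Nat.ltb; [reflexivity|].
  rewrite (sumN_ext _ _ (fun _ => 0)); [now rewrite sumN_zero|]. intros; lra.
Qed.

Lemma tops_bound (idx : node -> nat) ts : exists Nt, forall t, In t ts -> (idx t < Nt)%nat.
Proof.
  induction ts as [|t ts [Nt H]]; [exists O; intros _ []|].
  exists (S (Nat.max (idx t) Nt)). intros t' [<-|Ht]; [lia|]. specialize (H t' Ht). lia.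
Qed.

Fixpoint mkpsi (kf : nat -> nat) (k : nat) : nat :=
  match k with O => kf O | S k => Nat.max (kf (S k)) (S (mkpsi kf k)) end.

Lemma mkpsi_sincr kf : sincr (mkpsi kf).
Proof. intros k. simpl. lia. Qed.

Lemma mkpsi_ge kf k : (kf k <= mkpsi kf k)%nat.
Proof. destruct k; simpl; lia. Qed.

Section Case2.
Variable enum : nat -> node.
Variable idx : node -> nat.
Hypothesis Henum : compatible_enum enum idx.
Variable theta : node -> Prop.
Variable Y : vec -> Prop.
Hypothesis HY : closed_subspace theta idx Y.
Variable ts : list node.
Hypothesis Hinc : inc ts.

Notation R0 := (reg theta ts).

Lemma Yb y : Y y -> bdd theta y.
Proof. apply (Y_bdd enum idx Henum theta Y HY). Qed.

Lemma Yrb P y : Y y -> bdd theta (restr P y).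
Proof. intros H. apply bdd_dom with y; [intros; apply restr_abs|now apply Yb]. Qed.

Lemma not_case1 : ~ Case1 idx theta Y ts -> exists n0 N0 d0, 0 < d0 /\
  forall y, Y y -> nrm1 theta (restr R0 y) -> norm_le theta (hproj idx N0 y) d0 ->
    ~ norm_le theta (restr (Fp theta ts n0) y) d0.
Proof.
  intros Hn. apply NNPP. intros Hc. apply Hn. intros n N d Hd.
  apply NNPP. intros Hy. apply Hc. exists n, N, d. split; auto.
  intros y H1 H2 H3 H4. apply Hy. exists y. auto.
Qed.

Variables (n0 N0 : nat) (d0 : R).
Hypothesis Hd0 : 0 < d0.
Hypothesis Hc2 : forall y, Y y -> nrm1 theta (restr R0 y) -> norm_le theta (hproj idx N0 y) d0 ->
    ~ norm_le theta (restr (Fp theta ts n0) y) d0.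

Lemma lemK y : Y y -> 0 < nrm theta (restr R0 y) ->
  norm_le theta (hproj idx N0 y) (d0 * nrm theta (restr R0 y)) ->
  d0 * nrm theta (restr R0 y) < nrm theta (restr (Fp theta ts n0) y).
Proof.
  intros Hy Hr Hh. set (r := nrm theta (restr R0 y)) in *.
  set (y' := fun s => / r * y s).
  assert (Hy' : Y y') by (apply (Y_scale idx theta Y HY); exact Hy).
  assert (Hpos : 0 < / r) by (apply Rinv_0_lt_compat; exact Hr).
  assert (N1 : nrm1 theta (restr R0 y')).
  { apply nrm1_iff. unfold y'. rewrite restr_scale. split; [apply bdd_scale; now apply Yrb|].
    rewrite nrm_scale by now apply Yrb. rewrite Rabs_right by lra. fold r. field. lra. }
  assert (H2 : norm_le theta (hproj idx N0 y') d0).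
  { unfold y'. rewrite hproj_scale. apply nl_mono with (Rabs (/r) * (d0 * r)).
    - now apply nl_scale.
    - rewrite Rabs_right by lra. right. field. lra. }
  specialize (Hc2 y' Hy' N1 H2).
  apply nrm_gt in Hc2; [|now apply Yrb].
  unfold y' in Hc2. rewrite restr_scale, nrm_scale in Hc2 by now apply Yrb.
  rewrite Rabs_right in Hc2 by lra.
  apply Rmult_lt_compat_l with (r := r) in Hc2; [|exact Hr].
  rewrite <- Rmult_assoc, Rinv_r, Rmult_1_l in Hc2 by lra. lra.
Qed.

Variable Nt : nat.
Hypothesis HNt : forall t, In t ts -> (idx t < Nt)%nat.

Notation R1 := (reg theta (expand ts n0)).

Lemma F_dom x s : Rabs (restr (Fp theta ts n0) x s) <= Rabs (restr R1 x s) + Rabs (hproj idx Nt x s).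
Proof.
  unfold restr, hproj. destruct excluded_middle_informative as [[Hr [Hin|Hx]]|].
  - apply HNt in Hin. replace (Nat.ltb (idx s) Nt) with true by (symmetry; apply Nat.ltb_lt; exact Hin).
    pose proof (Rabs_pos (if excluded_middle_informative (R1 s) then x s else 0)). lra.
  - destruct excluded_middle_informative; [|contradiction]. pose proof (Rabs_pos (if Nat.ltb (idx s) Nt then x s else 0)). lra.
  - rewrite Rabs_R0. pose proof (Rabs_pos (if excluded_middle_informative (R1 s) then x s else 0)).
    pose proof (Rabs_pos (if Nat.ltb (idx s) Nt then x s else 0)). lra.
Qed.

Lemma R1_dom x s : Rabs (restr R1 x s) <= Rabs (restr R0 x s).
Proof.
  unfold restr. repeat destruct excluded_middle_informative; try lra.
  - exfalso. apply n. now apply reg_expand_sub with n0.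
  - rewrite Rabs_R0. apply Rabs_pos.
Qed.

Hypothesis HH : Hyp theta idx Y R0.

Lemma case2_hyp : Hyp theta idx Y R1.
Proof.
  intros N d Hd.
  set (d' := Rmin (d0 / 2) (d * d0 / 2)).
  assert (Hd' : 0 < d') by (unfold d'; apply Rmin_glb_lt; nra).
  assert (Hd'1 : d' <= d0 / 2) by apply Rmin_l.
  assert (Hd'2 : d' <= d * d0 / 2) by apply Rmin_r.
  destruct (HH (Nat.max N (Nat.max N0 Nt)) d' Hd') as [y [Hy [Hn Hh]]].
  apply nrm1_iff in Hn. destruct Hn as [_ Hn].
  assert (K := lemK y Hy).
  rewrite Hn in K. specialize (K ltac:(lra)).
  assert (K2 : d0 * 1 < nrm theta (restr (Fp theta ts n0) y)).
  { apply K. apply nl_dom with (hproj idx (Nat.max N (Nat.max N0 Nt)) y).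
    - intros; apply hproj_mono_abs; lia.
    - apply nl_mono with d'; auto. lra. }
  assert (K3 : nrm theta (restr (Fp theta ts n0) y) <= nrm theta (restr R1 y) + nrm theta (hproj idx Nt y)).
  { apply nrm_dom2; [intros; apply F_dom| |apply (bdd_hproj enum idx Henum)]. now apply Yrb. }
  assert (K4 : nrm theta (hproj idx Nt y) <= d').
  { apply nrm_least. apply nl_dom with (hproj idx (Nat.max N (Nat.max N0 Nt)) y); auto.
    intros; apply hproj_mono_abs; lia. }
  set (r := nrm theta (restr R1 y)) in *.
  assert (Hr : d0 / 2 <= r) by lra.
  assert (Hrp : 0 < r) by lra.
  exists (fun s => / r * y s). split; [now apply (Y_scale idx theta Y HY)|]. split.
  - apply nrm1_iff. rewrite restr_scale. split; [apply bdd_scale; now apply Yrb|].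
    rewrite nrm_scale by now apply Yrb. fold r. rewrite Rabs_right; [field; lra|].
    left; apply Rinv_0_lt_compat; lra.
  - rewrite hproj_scale. apply nl_mono with (Rabs (/r) * d').
    + apply nl_scale. apply nl_dom with (hproj idx (Nat.max N (Nat.max N0 Nt)) y); auto.
      intros; apply hproj_mono_abs; lia.
    + rewrite Rabs_right by (left; apply Rinv_0_lt_compat; lra).
      apply Rmult_le_reg_l with r; [lra|]. rewrite <- Rmult_assoc, Rinv_r, Rmult_1_l by lra.
      apply Rle_trans with (d * d0 / 2); [lra|]. nra.
Qed.


Lemma case2_concl : Concl theta idx Y R1 -> Concl theta idx Y R0.
Proof.
  intros [z [B' [HzY [Hzn [Hzh Hzu]]]]].
  set (N1 := Nat.max N0 Nt).
  set (kf := fun k => epsilon (inhabits O) (fun K => forall j, (K <= j)%nat ->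
                 norm_le theta (hproj idx N1 (z j)) ((/2) ^ (S k)))).
  assert (Hkf : forall k j, (kf k <= j)%nat -> norm_le theta (hproj idx N1 (z j)) ((/2) ^ (S k))).
  { intros k. unfold kf. apply epsilon_spec. apply Hzh. apply pow_half_pos. }
  set (psi := mkpsi kf).
  set (rho := fun k => nrm theta (restr R0 (z (psi k)))).
  assert (Hrho : forall k, 1 <= rho k).
  { intros k. destruct (proj1 (nrm1_iff _ _) (Hzn (psi k))) as [_ E]. rewrite <- E.
    apply nrm_dom; [intros; apply R1_dom|]. apply Yrb. apply HzY. }
  assert (Hirho : forall k, 0 < / rho k <= 1).
  { intros k. specialize (Hrho k). split; [apply Rinv_0_lt_compat; lra|].
    rewrite <- Rinv_1. apply Rinv_le_contravar; lra. }
  exists (fun k s => / rho k * z (psi k) s), ((Rmax B' 0 + 1) / d0).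
  split; [|split; [|split]].
  - intros k. apply (Y_scale idx theta Y HY). apply HzY.
  - intros k. apply nrm1_iff. rewrite restr_scale. split; [apply bdd_scale; apply Yrb; apply HzY|].
    rewrite nrm_scale by (apply Yrb; apply HzY). specialize (Hrho k).
    change (nrm theta (restr R0 (z (psi k)))) with (rho k).
    rewrite Rabs_right by (left; apply Rinv_0_lt_compat; lra). field. lra.
  - intros N d Hd. destruct (Hzh N d Hd) as [K HK]. exists K. intros k Hk.
    rewrite hproj_scale. apply nl_mono with (Rabs (/ rho k) * d).
    + apply nl_scale. apply HK. pose proof (sincr_ge psi (mkpsi_sincr kf) k). unfold psi in *. lia.
    + specialize (Hirho k). rewrite Rabs_right by lra. nra.
  - intros n a phi Hphi.
    set (b := fun i => a i * / rho (phi i)).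
    assert (Ew : lincomb n a (fun i => fun s => / rho (phi i) * z (psi (phi i)) s) =
                 lincomb n b (fun i => z (psi (phi i)))).
    { apply functional_extensionality. intros s. unfold lincomb. apply sumN_ext. intros i _.
      unfold b. ring. }
    rewrite Ew. set (w := lincomb n b (fun i => z (psi (phi i)))).
    assert (Hb : maxabsN n b <= maxabsN n a).
    { apply maxabs_le. intros i _. unfold b. rewrite Rabs_mult.
      specialize (Hirho (phi i)). rewrite (Rabs_right (/ rho (phi i))) by lra.
      pose proof (Rabs_pos (a i)). nra. }
    assert (Hs : sincr (fun i => psi (phi i))).
    { intros i. apply sincr_lt; [apply mkpsi_sincr|apply Hphi]. }
    assert (H1 : norm_le theta (restr R1 w) (Rmax B' 0 * maxabsN n b)).
    { apply nl_mono with (B' * maxabsN n b); [apply Hzu; exact Hs|].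
      apply Rmult_le_compat_r; [apply maxabs_nonneg|apply Rmax_l]. }
    assert (H2 : norm_le theta (hproj idx N1 w) (maxabsN n b)).
    { unfold w. rewrite hproj_lincomb.
      apply nl_mono with (sumN n (fun i => Rabs (b i) * (/2) ^ (S i))).
      - apply nl_mono with (sumN n (fun i => Rabs (b i) * (/2) ^ (S (phi i)))).
        + apply nl_lincomb. intros i _. apply Hkf. unfold psi. apply mkpsi_ge.
        + apply sumN_le. intros i _. apply Rmult_le_compat_l; [apply Rabs_pos|].
          apply pow_half_le. pose proof (sincr_ge phi Hphi i). lia.
      - apply Rle_trans with (sumN n (fun i => maxabsN n b * (/2) ^ (S i))).
        + apply sumN_le. intros i Hi. apply Rmult_le_compat_r; [left; apply pow_half_pos|].
          now apply maxabs_ge.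
        + rewrite sumN_scal, geom_sum. pose proof (maxabs_nonneg n b). pose proof (pow_half_pos n). nra. }
    assert (H3 : norm_le theta (restr (Fp theta ts n0) w) ((Rmax B' 0 + 1) * maxabsN n b)).
    { rewrite Rmult_plus_distr_r, Rmult_1_l.
      apply nl_dom2 with (restr R1 w) (hproj idx Nt w); [intros; apply F_dom|exact H1|].
      apply nl_dom with (hproj idx N1 w); [intros; apply hproj_mono_abs; unfold N1; lia|exact H2]. }
    assert (Yw : Y w) by (apply (Y_lincomb idx theta Y HY); intros; apply HzY).
    assert (Bx : bdd theta (restr R0 w)) by now apply Yrb.
    set (X := nrm theta (restr R0 w)).
    assert (HX : d0 * X <= (Rmax B' 0 + 1) * maxabsN n a).
    { assert (Hm : 0 <= Rmax B' 0 + 1) by (pose proof (Rmax_r B' 0); lra).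
      assert (Hc : (Rmax B' 0 + 1) * maxabsN n b <= (Rmax B' 0 + 1) * maxabsN n a)
        by (apply Rmult_le_compat_l; auto).
      destruct (Rle_dec X 0) as [L|L].
      - pose proof (maxabs_nonneg n a). nra.
      - destruct (classic (norm_le theta (hproj idx N0 w) (d0 * X))) as [Hh|Hh].
        + pose proof (lemK w Yw ltac:(unfold X in L; lra) Hh) as K.
          pose proof (nrm_least _ _ _ H3). fold X in K. lra.
        + apply nrm_gt in Hh; [|apply (bdd_hproj enum idx Henum)].
          assert (nrm theta (hproj idx N0 w) <= nrm theta (hproj idx N1 w)).
          { apply nrm_dom; [intros; apply hproj_mono_abs; unfold N1; lia|apply (bdd_hproj enum idx Henum)]. }
          pose proof (nrm_least _ _ _ H2).
          assert (maxabsN n b <= (Rmax B' 0 + 1) * maxabsN n b).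
          { pose proof (maxabs_nonneg n b). pose proof (Rmax_r B' 0). nra. }
          lra. }
    apply nl_mono with X; [now apply nrm_le|].
    unfold Rdiv. apply Rmult_le_reg_l with d0; [exact Hd0|].
    replace (d0 * ((Rmax B' 0 + 1) * / d0 * maxabsN n a)) with ((Rmax B' 0 + 1) * maxabsN n a)
      by (field; lra). exact HX.
Qed.

End Case2.

Lemma pigeon n (P : nat -> nat -> Prop) :
  (forall c j j', (j' <= j)%nat -> P c j -> P c j') ->
  (forall j, exists c, (c < n)%nat /\ P c j) -> exists c, (c < n)%nat /\ forall j, P c j.
Proof.
  induction n; intros Hm H.
  - destruct (H O) as [c [Hc _]]. lia.
  - destruct (classic (forall j, P n j)) as [Hn|Hn]; [exists n; split; auto|].
    apply not_all_ex_not in Hn. destruct Hn as [j0 Hj0].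
    destruct IHn as [c [Hc Hc']]; auto.
    + intros j. destruct (H (Nat.max j j0)) as [c [Hc Hp]].
      destruct (Nat.eq_dec c n) as [->|Hne].
      * exfalso. apply Hj0. apply (Hm n (Nat.max j j0)); auto; lia.
      * exists c. split; [lia|]. apply (Hm c (Nat.max j j0)); auto; lia.
    + exists c. split; auto.
Qed.

Section Main.
Variable enum : nat -> node.
Variable idx : node -> nat.
Hypothesis Henum : compatible_enum enum idx.
Variable theta : node -> Prop.
Hypothesis Htree : is_tree theta.
Hypothesis Hwf : well_founded_tree theta.
Variable Y : vec -> Prop.
Hypothesis HY : closed_subspace theta idx Y.

Lemma step ts : inc ts -> Hyp theta idx Y (reg theta ts) ->
  Concl theta idx Y (reg theta ts) \/
  exists n0, Hyp theta idx Y (reg theta (expand ts n0)) /\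
    (Concl theta idx Y (reg theta (expand ts n0)) -> Concl theta idx Y (reg theta ts)).
Proof.
  intros Hinc HH. destruct (classic (Case1 idx theta Y ts)) as [C|C].
  - left. now apply (case1_concl enum idx Henum theta Y HY ts Hinc).
  - right. destruct (not_case1 idx theta Y ts C) as [n0 [N0 [d0 [Hd0 Hc2]]]].
    destruct (tops_bound idx ts) as [Nt HNt]. exists n0. split.
    + now apply (case2_hyp enum idx Henum theta Y HY ts n0 N0 d0 Hd0 Hc2 Nt HNt).
    + now apply (case2_concl enum idx Henum theta Y HY ts n0 N0 d0 Hd0 Hc2 Nt HNt).
Qed.

Definition bad ts := inc ts /\ Hyp theta idx Y (reg theta ts) /\ ~ Concl theta idx Y (reg theta ts).

Lemma bad_step ts : bad ts -> exists n, bad (expand ts n).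
Proof.
  intros [H1 [H2 H3]]. destruct (step ts H1 H2) as [C|[n0 [Hh Hc]]]; [contradiction|].
  exists n0. split; [now apply inc_expand|]. split; auto.
Qed.

Lemma hyp_nonempty Rg : Hyp theta idx Y Rg -> exists s, Rg s.
Proof.
  intros H. destruct (H O 1 ltac:(lra)) as [y [_ [[_ Hg] _]]].
  apply NNPP. intros Hn. assert (norm_le theta (restr Rg y) 0).
  { apply nl_ext with (fun _ => 0); [|apply nl_zero; lra].
    intros s. unfold restr. destruct excluded_middle_informative; [|reflexivity].
    exfalso. apply Hn. now exists s. }
  specialize (Hg 0 H0). lra.
Qed.

Definition nxt ts := epsilon (inhabits O) (fun n => bad (expand ts n)).

Fixpoint tsq (i : nat) : list node := match i with O => [[]] | S i => expand (tsq i) (nxt (tsq i)) end.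

Hypothesis Hbad0 : bad [[]].

Lemma tsq_bad i : bad (tsq i).
Proof.
  induction i; [exact Hbad0|]. simpl. unfold nxt. apply epsilon_spec. now apply bad_step.
Qed.

Lemma tsq_nonempty j : exists s, reg theta (tsq j) s.
Proof. apply hyp_nonempty. apply (tsq_bad j). Qed.

Lemma tsq_nested i j s : (i <= j)%nat -> reg theta (tsq j) s -> reg theta (tsq i) s.
Proof. intros H. induction H; auto. intros Hr. apply IHle. simpl in Hr. now apply reg_expand_sub in Hr. Qed.

Lemma tsq_anc i j u : (i <= j)%nat -> In u (tsq j) -> exists t, In t (tsq i) /\ prefix t u.
Proof.
  intros H. revert u. induction H; intros u Hu.
  - exists u. split; auto. apply prefix_refl.
  - simpl in Hu. apply in_expand in Hu. destruct Hu as [t [c [Ht [_ ->]]]].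
    destruct (IHle t Ht) as [t' [Ht' Hp]]. exists t'. split; auto.
    apply prefix_trans with t; auto. now exists [c].
Qed.

Definition live i t := In t (tsq i) /\ forall j, (i <= j)%nat -> exists s, reg theta (tsq j) s /\ prefix t s.

Lemma live0 : live O [].
Proof.
  split; [now left|]. intros j _. destruct (tsq_nonempty j) as [s Hs]. exists s. split; auto.
  now exists s.
Qed.

Lemma live_step i t : live i t -> exists c, live (S i) (t ++ [c]).
Proof.
  intros [Hin Hl].
  set (n := nxt (tsq i)).
  set (P := fun c j => exists s, reg theta (tsq (j + S i)) s /\ prefix (t ++ [c]) s).
  destruct (pigeon n P) as [c [Hc Hall]].
  - intros c j j' Hj [s [Hs Hp]]. exists s. split; auto. apply tsq_nested with (j + S i)%nat; auto. lia.
  - intros j. destruct (Hl (j + S i)%nat ltac:(lia)) as [s [Hs Hp]].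
    pose proof Hs as [Hth [u [Hu Hus]]].
    destruct (tsq_anc (S i) (j + S i)%nat u ltac:(lia) Hu) as [v [Hv Hvu]].
    simpl in Hv. apply in_expand in Hv. destruct Hv as [t0 [c [Ht0 [Hc ->]]]].
    exists c. split; [exact Hc|]. exists s. split; auto.
    assert (Hp0 : prefix (t0 ++ [c]) s) by (apply prefix_trans with u; auto).
    assert (prefix t0 s) by (apply prefix_trans with (t0 ++ [c]); auto; now exists [c]).
    destruct (tsq_bad i) as [Hinc _].
    assert (t0 = t).
    { destruct (prefix_comparable t0 t s) as [Q|Q]; auto. symmetry; auto. }
    now subst t0.
  - exists c. split.
    + simpl. apply in_expand. exists t, c. auto.
    + intros j Hj. destruct (Hall (j - S i)%nat) as [s [Hs Hp]]. exists s. split; auto.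
      now replace j with (j - S i + S i)%nat by lia.
Qed.

Definition ch i t := epsilon (inhabits O) (fun c => live (S i) (t ++ [c])).

Fixpoint br (i : nat) : node := match i with O => [] | S i => br i ++ [ch i (br i)] end.

Lemma br_live i : live i (br i).
Proof.
  induction i; [exact live0|]. simpl. unfold ch. apply epsilon_spec. now apply live_step.
Qed.

Lemma contradiction_wf : False.
Proof.
  apply Hwf. exists (fun i => ch i (br i)). intros n.
  assert (E : map (fun i => ch i (br i)) (seq 0 n) = br n).
  { induction n; [reflexivity|]. rewrite seq_S, map_app, IHn. reflexivity. }
  rewrite E. destruct (br_live n) as [_ Hl]. destruct (Hl n (le_n n)) as [s [[Hs _] Hp]].
  now apply Htree with s.
Qed.

End Main.

Lemma main_concl enum idx theta Y : compatible_enum enum idx -> is_tree theta -> well_founded_tree theta ->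
  closed_subspace theta idx Y -> Hyp theta idx Y (reg theta [[]]) -> Concl theta idx Y (reg theta [[]]).
Proof.
  intros He Ht Hw HY HH. apply NNPP. intros Hn.
  apply (contradiction_wf enum idx He theta Ht Hw Y HY).
  split; [apply inc_single|]. split; auto.
Qed.

Definition sk (i0 i : nat) : nat := if Nat.ltb i i0 then i else S i.

Lemma sumN_skip n' i0 h : (i0 <= n')%nat -> sumN (S n') h = h i0 + sumN n' (fun i => h (sk i0 i)).
Proof.
  induction n'; intros H.
  - assert (i0 = O) by lia. subst. simpl. lra.
  - destruct (Nat.eq_dec i0 (S n')) as [->|Hne].
    + change (sumN (S (S n')) h) with (sumN (S n') h + h (S n')).
      rewrite (sumN_ext (S n') (fun i => h (sk (S n') i)) h).
      * lra.
      * intros i Hi. unfold sk. replace (Nat.ltb i (S n')) with true; [reflexivity|].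
        symmetry; apply Nat.ltb_lt; lia.
    + change (sumN (S (S n')) h) with (sumN (S n') h + h (S n')).
      rewrite IHn' by lia. simpl.
      replace (sk i0 n') with (S n'); [lra|]. unfold sk.
      replace (Nat.ltb n' i0) with false; [reflexivity|]. symmetry; apply Nat.ltb_ge; lia.
Qed.

Lemma dep m : forall n (f : nat -> nat -> R), (m < n)%nat -> exists a : nat -> R,
  (exists i, (i < n)%nat /\ a i <> 0) /\ forall j, (j < m)%nat -> sumN n (fun i => a i * f i j) = 0.
Proof.
  induction m as [|m IH]; intros n f Hn.
  - exists (fun _ => 1). split; [exists O; split; [lia|lra]|]. intros; lia.
  - destruct (classic (exists i0, (i0 < n)%nat /\ f i0 m <> 0)) as [[i0 [Hi0 Hf]]|Hno].
    + destruct n as [|n']; [lia|].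
      set (g := fun i j => f (sk i0 i) j - (f (sk i0 i) m / f i0 m) * f i0 j).
      destruct (IH n' g ltac:(lia)) as [b [[i1 [Hi1 Hb]] Hsum]].
      set (al := - sumN n' (fun i => b i * (f (sk i0 i) m / f i0 m))).
      exists (fun k => if Nat.eq_dec k i0 then al else if Nat.ltb k i0 then b k else b (k - 1)%nat).
      assert (Ha : forall i, (if Nat.eq_dec (sk i0 i) i0 then al else if Nat.ltb (sk i0 i) i0 then b (sk i0 i) else b (sk i0 i - 1)%nat) = b i).
      { intros i. unfold sk. destruct (Nat.ltb i i0) eqn:E.
        - apply Nat.ltb_lt in E. destruct (Nat.eq_dec i i0); [lia|].
          replace (Nat.ltb i i0) with true by (symmetry; apply Nat.ltb_lt; lia). reflexivity.
        - apply Nat.ltb_ge in E. destruct (Nat.eq_dec (S i) i0); [lia|].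
          replace (Nat.ltb (S i) i0) with false by (symmetry; apply Nat.ltb_ge; lia).
          f_equal. lia. }
      split.
      * exists (sk i0 i1). split; [unfold sk; destruct Nat.ltb; lia|]. rewrite Ha. exact Hb.
      * intros j Hj. rewrite (sumN_skip n' i0) by lia.
        rewrite (sumN_ext n' _ (fun i => b i * f (sk i0 i) j)) by (intros; rewrite Ha; reflexivity).
        destruct (Nat.eq_dec i0 i0) as [_|]; [|congruence].
        assert (E2 : sumN n' (fun i => b i * f (sk i0 i) j) =
                     sumN n' (fun i => b i * g i j) + sumN n' (fun i => b i * (f (sk i0 i) m / f i0 m)) * f i0 j).
        { rewrite <- (Rmult_comm (f i0 j)), <- sumN_scal, <- sumN_plus. apply sumN_ext.
          intros i _. unfold g. ring. }
        rewrite E2. unfold al.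
        destruct (Nat.eq_dec j m) as [->|Hjm].
        -- rewrite (sumN_ext n' (fun i => b i * g i m) (fun _ => 0)).
           ++ rewrite sumN_zero. ring.
           ++ intros i _. unfold g. field. exact Hf.
        -- rewrite Hsum by lia. ring.
    + destruct (IH n f ltac:(lia)) as [a [Ha Hs]]. exists a. split; auto.
      intros j Hj. destruct (Nat.eq_dec j m) as [->|Hjm]; [|apply Hs; lia].
      rewrite (sumN_ext _ _ (fun _ => 0)); [apply sumN_zero|].
      intros i Hi. assert (f i m = 0) by (apply NNPP; intros C; apply Hno; exists i; auto).
      rewrite H. ring.
Qed.

Definition eta (i : nat) : R := (/2) ^ (i + 5).

Lemma eta_pos i : 0 < eta i.
Proof. apply pow_half_pos. Qed.

Lemma eta_eq i : eta i = (/2) ^ (S i) * / 16.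
Proof.
  unfold eta. replace (i + 5)%nat with (S i + 4)%nat by lia. rewrite pow_add. simpl. field.
Qed.

Lemma eta_small i : eta i <= / 32.
Proof.
  unfold eta. apply Rle_trans with ((/2) ^ 5); [apply pow_half_le; lia|]. simpl. lra.
Qed.

Lemma eta_lt i : eta i < / 2 ^ (i + 2).
Proof.
  rewrite <- pow_inv. unfold eta. replace (i + 5)%nat with ((i + 2) + 3)%nat by lia.
  rewrite pow_add. pose proof (pow_half_pos (i + 2)). simpl. nra.
Qed.

Lemma eta_sum n : sumN n eta <= / 16.
Proof.
  rewrite (sumN_ext n eta (fun i => / 16 * (/2) ^ (S i))) by (intros; rewrite eta_eq; ring).
  rewrite sumN_scal, geom_sum. pose proof (pow_half_pos n). lra.
Qed.

Definition sgn (r : R) : R := if Rle_dec 0 r then 1 else -1.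

Lemma sgn_abs r : Rabs (sgn r) = 1.
Proof. unfold sgn. destruct Rle_dec; [apply Rabs_R1|]. rewrite Rabs_left by lra. ring. Qed.

Lemma gapply_cons p g x : gapply (p :: g) x = fst p * x (snd p) + gapply g x.
Proof. reflexivity. Qed.

Lemma gsgn x l : gapply (map (fun s => (sgn (x s), s)) l) x = chain_sum x l.
Proof.
  induction l as [|a l IH]; [reflexivity|]. simpl map. rewrite gapply_cons, cs_cons, IH. simpl.
  unfold sgn. destruct Rle_dec.
  - rewrite Rabs_right by lra. ring.
  - rewrite Rabs_left by lra. ring.
Qed.

Lemma gabs c x l : Rabs (gapply (map (fun s => (sgn (c s), s)) l) x) <= chain_sum x l.
Proof.
  induction l as [|a l IH]; [simpl; rewrite Rabs_R0; lra|]. simpl map. rewrite gapply_cons, cs_cons.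
  eapply Rle_trans; [apply Rabs_triang|]. simpl. rewrite Rabs_mult, sgn_abs. lra.
Qed.

Lemma glin g n a v : gapply g (lincomb n a v) = sumN n (fun i => a i * gapply g (v i)).
Proof.
  induction g as [|p g IH].
  - simpl. symmetry. rewrite (sumN_ext _ _ (fun _ => 0)); [apply sumN_zero|]. intros; ring.
  - rewrite gapply_cons, IH. unfold lincomb.
    replace (fst p * sumN n (fun i => a i * v i (snd p))) with (sumN n (fun i => a i * (fst p * v i (snd p)))).
    + rewrite <- sumN_plus. apply sumN_ext. intros. rewrite gapply_cons. ring.
    + rewrite <- sumN_scal. apply sumN_ext. intros; ring.
Qed.

Lemma cs_filter (f : node -> bool) x l : chain_sum x (filter f l) = chain_sum (fun s => if f s then x s else 0) l.
Proof.
  induction l as [|a l IH]; [reflexivity|].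
  change (filter f (a :: l)) with (if f a then a :: filter f l else filter f l).
  rewrite (cs_cons (fun s => if f s then x s else 0)). cbv beta.
  destruct (f a); [rewrite cs_cons, IH; reflexivity|]. rewrite IH, Rabs_R0. ring.
Qed.

Section Extract.
Variable theta : node -> Prop.
Variable idx : node -> nat.
Variable z : nat -> vec.
Hypothesis Hzh : headnull theta idx z.
Hypothesis HzT : forall k d, 0 < d -> exists M, forall n, (M <= n)%nat -> norm_le theta (tail_proj idx n (z k)) d.

Definition Q (i : nat) (p q : nat * nat) : Prop :=
  (fst p <= fst q)%nat /\ norm_le theta (hproj idx (snd p) (z (fst q))) (eta i) /\
  (snd p <= snd q)%nat /\ norm_le theta (tail_proj idx (snd q) (z (fst q))) (eta i).

Lemma Q_ex i p : exists q, Q i p q.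
Proof.
  destruct (Hzh (snd p) (eta i) (eta_pos i)) as [K HK].
  set (k := Nat.max K (fst p)).
  destruct (HzT k (eta i) (eta_pos i)) as [M HM].
  exists (k, Nat.max M (snd p)). unfold Q; simpl. split; [lia|]. split; [apply HK; lia|].
  split; [lia|]. apply HM. lia.
Qed.

Definition sel i p := epsilon (inhabits (O, O)) (Q i p).

Fixpoint st (i : nat) : nat * nat :=
  match i with O => (O, O) | S i => (S (fst (sel i (st i))), snd (sel i (st i))) end.

Definition kk i := fst (sel i (st i)).
Definition MM i := snd (sel i (st i)).
Definition Mp i := snd (st i).

Lemma Qspec i : Q i (st i) (sel i (st i)).
Proof. unfold sel. apply epsilon_spec. apply Q_ex. Qed.

Lemma kk_sincr : sincr kk.
Proof.
  intros i. destruct (Qspec (S i)) as [H _]. assert (E : fst (st (S i)) = S (kk i)) by reflexivity.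
  rewrite E in H. unfold kk at 2. lia.
Qed.

Lemma Mp_S i : Mp (S i) = MM i.
Proof. reflexivity. Qed.

Lemma Mp_le_MM i : (Mp i <= MM i)%nat.
Proof. destruct (Qspec i) as [_ [_ [H _]]]. exact H. Qed.

Lemma Mp_mono i k : (i <= k)%nat -> (Mp i <= Mp k)%nat.
Proof. intros H. induction H; [lia|]. rewrite Mp_S. pose proof (Mp_le_MM m). lia. Qed.

Lemma MM_le_Mp i k : (i < k)%nat -> (MM i <= Mp k)%nat.
Proof. intros H. rewrite <- Mp_S. apply Mp_mono. lia. Qed.

Lemma head_small i : norm_le theta (hproj idx (Mp i) (z (kk i))) (eta i).
Proof. destruct (Qspec i) as [_ [H _]]. exact H. Qed.

Lemma tail_small i : norm_le theta (tail_proj idx (MM i) (z (kk i))) (eta i).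
Proof. destruct (Qspec i) as [_ [_ [_ H]]]. exact H. Qed.

Hypothesis Hn : forall k, nrm1 theta (z k).

Definition u i := z (kk i).

Lemma lch_ex i : exists l, is_chain theta l /\ 1 - eta i < chain_sum (u i) l.
Proof.
  apply NNPP. intros C. destruct (Hn (kk i)) as [_ Hg].
  assert (norm_le theta (u i) (1 - eta i)).
  { intros l Hl. apply Rnot_lt_le. intros L. apply C. exists l. auto. }
  specialize (Hg _ H). pose proof (eta_pos i). lra.
Qed.

Definition lch i := epsilon (inhabits []) (fun l => is_chain theta l /\ 1 - eta i < chain_sum (u i) l).

Lemma lch_spec i : is_chain theta (lch i) /\ 1 - eta i < chain_sum (u i) (lch i).
Proof. unfold lch. apply epsilon_spec. apply lch_ex. Qed.

Definition win i (s : node) : bool := (Nat.leb (Mp i) (idx s) && Nat.ltb (idx s) (MM i))%bool.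

Definition lw i := filter (win i) (lch i).

Definition gg i := map (fun s => (sgn (u i s), s)) (lw i).

Lemma lw_chain i : is_chain theta (lw i).
Proof. apply is_chain_filter. apply lch_spec. Qed.

Lemma lw_win i s : In s (lw i) -> (Mp i <= idx s)%nat /\ (idx s < MM i)%nat.
Proof.
  intros H. apply filter_In in H. destruct H as [_ H]. unfold win in H.
  apply andb_prop in H. destruct H as [H1 H2]. apply Nat.leb_le in H1. apply Nat.ltb_lt in H2. lia.
Qed.

Lemma gg_ii i : 1 - 3 * eta i < gapply (gg i) (u i).
Proof.
  unfold gg. rewrite gsgn. unfold lw. rewrite cs_filter.
  destruct (lch_spec i) as [Hc Hs].
  set (h := hproj idx (Mp i) (u i)). set (t := tail_proj idx (MM i) (u i)).
  assert (K : chain_sum (u i) (lch i) <= chain_sum (fun s => if win i s then u i s else 0) (lch i) +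
             chain_sum (fun s => Rabs (h s) + Rabs (t s)) (lch i)).
  { apply cs_dom2. intros s _. rewrite (Rabs_right (Rabs (h s) + Rabs (t s))) by
      (pose proof (Rabs_pos (h s)); pose proof (Rabs_pos (t s)); lra).
    unfold h, t, hproj, tail_proj, win.
    destruct (Nat.leb (Mp i) (idx s)) eqn:E1; destruct (Nat.ltb (idx s) (MM i)) eqn:E2;
    destruct (Nat.ltb (idx s) (Mp i)) eqn:E3; simpl; rewrite ?Rabs_R0;
    pose proof (Rabs_pos (u i s)); try lra.
    apply Nat.leb_gt in E1. apply Nat.ltb_ge in E3. lia. }
  assert (K2 : chain_sum (fun s => Rabs (h s) + Rabs (t s)) (lch i) <= chain_sum h (lch i) + chain_sum t (lch i)).
  { apply cs_dom2. intros s _. rewrite Rabs_right; [lra|]. pose proof (Rabs_pos (h s)); pose proof (Rabs_pos (t s)); lra. }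
  assert (chain_sum h (lch i) <= eta i) by (apply head_small; exact Hc).
  assert (chain_sum t (lch i) <= eta i) by (apply tail_small; exact Hc).
  lra.
Qed.

Lemma gg_ik i k : i <> k -> Rabs (gapply (gg i) (u k)) <= eta k.
Proof.
  intros Hik. unfold gg. eapply Rle_trans; [apply gabs|].
  destruct (Nat.lt_trichotomy i k) as [L|[L|L]]; [|contradiction|].
  - rewrite (cs_ext _ (hproj idx (Mp k) (u k))).
    + apply head_small. apply lw_chain.
    + intros s Hs. apply lw_win in Hs. pose proof (MM_le_Mp i k L). unfold hproj.
      replace (Nat.ltb (idx s) (Mp k)) with true; [reflexivity|]. symmetry; apply Nat.ltb_lt; lia.
  - rewrite (cs_ext _ (tail_proj idx (MM k) (u k))).
    + apply tail_small. apply lw_chain.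
    + intros s Hs. apply lw_win in Hs. pose proof (MM_le_Mp k i L). unfold tail_proj.
      replace (Nat.ltb (idx s) (MM k)) with false; [reflexivity|]. symmetry; apply Nat.ltb_ge; lia.
Qed.

Lemma gg_G i : in_G theta (gg i).
Proof.
  split.
  - unfold gg. rewrite map_map. simpl. rewrite map_id. apply lw_chain.
  - apply Forall_forall. intros p Hp. unfold gg in Hp. apply in_map_iff in Hp.
    destruct Hp as [s [<- _]]. apply sgn_abs.
Qed.

Lemma gg_lt i : glt idx (gg i) (gg (S i)).
Proof.
  intros p p' Hp Hp' _ _. unfold gg in *. apply in_map_iff in Hp. apply in_map_iff in Hp'.
  destruct Hp as [s [<- Hs]]. destruct Hp' as [s' [<- Hs']]. simpl.
  apply lw_win in Hs. apply lw_win in Hs'. rewrite Mp_S in Hs'. lia.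
Qed.

End Extract.

Section Final.
Variable enum : nat -> node.
Variable idx : node -> nat.
Hypothesis Henum : compatible_enum enum idx.
Variable theta : node -> Prop.
Variable Y : vec -> Prop.
Hypothesis HY : closed_subspace theta idx Y.
Hypothesis Hinf : infinite_dimensional Y.

Lemma restr_R0 y : Y y -> restr (reg theta [[]]) y = y.
Proof.
  intros Hy. apply functional_extensionality. intros s. unfold restr.
  destruct excluded_middle_informative as [|Hn]; [reflexivity|].
  symmetry. apply (Y_supp idx theta Y HY y s Hy). intros Ht. apply Hn. split; auto.
  exists []. split; [now left|]. now exists s.
Qed.

Lemma hyp0 : Hyp theta idx Y (reg theta [[]]).
Proof.
  intros N d Hd. destruct (Hinf (S N)) as [v [Hv Hind]].
  destruct (dep N (S N) (fun i j => v i (enum j)) ltac:(lia)) as [a [[i [Hi Ha]] Hs]].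
  set (y := lincomb (S N) a v).
  assert (Hy : Y y) by (apply (Y_lincomb idx theta Y HY); auto).
  assert (Hy0 : forall s, (idx s < N)%nat -> y s = 0).
  { intros s Hs0. unfold y, lincomb. rewrite <- (enum_idx enum idx Henum s). apply Hs. exact Hs0. }
  assert (Hne : exists s, y s <> 0).
  { apply NNPP. intros C. apply Ha. apply (Hind a); auto. intros s.
    apply NNPP. intros C2. apply C. exists s. exact C2. }
  destruct Hne as [s Hs0].
  assert (Hth : theta s).
  { apply NNPP. intros C. apply Hs0. now apply (Y_supp idx theta Y HY). }
  assert (By : bdd theta y) by (apply (Y_bdd enum idx Henum theta Y HY); exact Hy).
  set (r := nrm theta y).
  assert (Hr : 0 < r).
  { pose proof (nrm_le theta y By [s] (is_chain_single theta s Hth)). rewrite cs_cons in H.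
    simpl in H. pose proof (Rabs_pos_lt _ Hs0). unfold r. lra. }
  exists (fun s => / r * y s). split; [now apply (Y_scale idx theta Y HY)|]. split.
  - rewrite restr_R0 by now apply (Y_scale idx theta Y HY). apply nrm1_iff.
    split; [now apply bdd_scale|]. rewrite nrm_scale by exact By. fold r.
    rewrite Rabs_right by (left; apply Rinv_0_lt_compat; lra). field. lra.
  - apply nl_ext with (fun _ => 0); [|apply nl_zero; lra].
    intros s'. unfold hproj. destruct (Nat.ltb (idx s') N) eqn:E; [|reflexivity].
    apply Nat.ltb_lt in E. rewrite Hy0 by exact E. ring.
Qed.

End Final.

Theorem lemma5p14 (enum : nat -> node) (idx : node -> nat)
  (Henum : compatible_enum enum idx)
  (theta : node -> Prop) (Htree : is_tree theta) (Hwf : well_founded_tree theta)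
  (Y : vec -> Prop) (HY : closed_subspace theta idx Y)
  (Hinf : infinite_dimensional Y) :
  exists (y : nat -> vec) (g : nat -> list (R * node)),
    (forall i, Y (y i)) /\
    (forall i, normalized theta (y i)) /\
    equiv_c0_basis theta y /\
    (forall i, in_G theta (g i)) /\
    (forall i, glt idx (g i) (g (S i))) /\
    (forall i, gapply (g i) (y i) > 1/2) /\
    (forall i k, i <> k -> Rabs (gapply (g i) (y k)) < / 2 ^ (k + 2)).
Proof.
  destruct (main_concl enum idx theta Y Henum Htree Hwf HY (hyp0 enum idx Henum theta Y HY Hinf))
    as [z [B [HzY [Hzn [Hzh Hzu]]]]].
  assert (Hzn' : forall k, nrm1 theta (z k)) by (intros k; rewrite <- (restr_R0 idx theta Y HY); auto).
  assert (HzT : forall k d, 0 < d -> exists M, forall n, (M <= n)%nat -> norm_le theta (tail_proj idx n (z k)) d).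
  { intros k d Hd. apply (Y_tail idx theta Y HY); auto. }
  set (kq := kk theta idx z).
  set (uq := u theta idx z).
  set (gq := gg theta idx z).
  exists uq, gq.
  split; [|split; [|split; [|split; [|split; [|split]]]]].
  - intros i. apply HzY.
  - intros i. apply Hzn'.
  - exists (1/2), (Rmax B 1). split; [lra|]. split; [pose proof (Rmax_r B 1); lra|].
    intros n a. split.
    + intros M HM. destruct n as [|n'].
      * simpl. pose proof (nl_nonneg _ _ _ HM). lra.
      * destruct (maxabs_attained (S n') a ltac:(lia)) as [j [Hj Ej]].
        assert (HG := gabs (u theta idx z j) (lincomb (S n') a uq) (lw theta idx z j)).
        fold (gg theta idx z j) in HG.
        assert (Hc := HM _ (lw_chain theta idx z Hzn' j)).
        rewrite glin in HG. rewrite (sumN_split (S n') j) in HG by exact Hj.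
        set (S' := sumN (S n') (fun i => if Nat.eq_dec i j then 0 else a i * gapply (gg theta idx z j) (uq i))) in HG.
        assert (HS : Rabs S' <= maxabsN (S n') a * / 16).
        { unfold S'. eapply Rle_trans; [apply sumN_abs|].
          apply Rle_trans with (sumN (S n') (fun i => maxabsN (S n') a * eta i)).
          - apply sumN_le. intros i Hi. destruct (Nat.eq_dec i j); [rewrite Rabs_R0; pose proof (maxabs_nonneg (S n') a); pose proof (eta_pos i); nra|].
            rewrite Rabs_mult. apply Rmult_le_compat; try apply Rabs_pos; [now apply maxabs_ge|].
            apply (gg_ik theta idx z Hzh HzT Hzn'). auto.
          - rewrite sumN_scal. pose proof (eta_sum (S n')). pose proof (maxabs_nonneg (S n') a). nra. }
        pose proof (gg_ii theta idx z Hzh HzT Hzn' j) as Hjj. fold uq in Hjj.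
        pose proof (eta_small j).
        assert (Hgj : 0 < gapply (gg theta idx z j) (uq j)) by lra.
        assert (Rabs (a j * gapply (gg theta idx z j) (uq j)) >= maxabsN (S n') a * (1 - 3 / 32)).
        { rewrite Rabs_mult, Ej, (Rabs_right (gapply _ _)) by lra.
          pose proof (maxabs_nonneg (S n') a). apply Rle_ge. apply Rmult_le_compat_l; lra. }
        set (x := a j * gapply (gg theta idx z j) (uq j)) in *.
        assert (Rabs x <= Rabs (x + S') + Rabs S').
        { replace x with ((x + S') + - S') at 1 by ring. rewrite <- (Rabs_Ropp S'). apply Rabs_triang. }
        pose proof (maxabs_nonneg (S n') a). lra.
    + apply nl_mono with (B * maxabsN n a).
      * specialize (Hzu n a kq (kk_sincr theta idx z Hzh HzT)).
        rewrite (restr_R0 idx theta Y HY) in Hzu; [exact Hzu|].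
        apply (Y_lincomb idx theta Y HY). intros; apply HzY.
      * apply Rmult_le_compat_r; [apply maxabs_nonneg|apply Rmax_l].
  - intros i. apply (gg_G theta idx z Hzn').
  - intros i. apply (gg_lt theta idx z).
  - intros i. pose proof (gg_ii theta idx z Hzh HzT Hzn' i). pose proof (eta_small i). unfold gq, uq. lra.
  - intros i k Hik. eapply Rle_lt_trans; [apply (gg_ik theta idx z Hzh HzT Hzn'); exact Hik|]. apply eta_lt.
Qed.
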